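(* Let $m=2^k$ with $k\ge 2$, $\omega=e^{2\pi i/m}$, $F_m=\frac{1}{\sqrt m}(\omega^{jk})_{j,k=0}^{m-1}$, and $\alpha\in\mathbb{C}$. For $j\ge 0$ let $B_j=\frac{1}{\sqrt{1+|\alpha|^{2j}}}\begin{pmatrix}1&\alpha^j\\ \overline{\alpha}^j&-1\end{pmatrix}$. Let $J$ be the $m\times m$ permutation matrix with $J\ket{i}=\ket{2i}$ and $J\ket{m-1-i}=\ket{2i+1}$ for $0\le i<m/2$ (basis $\ket{0},\dots,\ket{m-1}$). Define $A=J^\dagger\left(B_{m/4}\otimes B_{m/8}\otimes\cdots\otimes B_2\otimes B_1\otimes B_0\right)JF_m^\dagger$. Let $\ket{\Psi}=\frac{1}{\sqrt\kappa}(1,\alpha,\alpha^2,\dots,\alpha^{m/2-1},\alpha^{m/2-1},\dots,\alpha,1)^T\in\mathbb{C}^m$ with $\kappa=2m(1+|\alpha|^2+|\alpha|^4+\cdots+|\alpha|^{m-2})$, and write $\ket{\Psi}=(v_1,\dots,v_m)^T$. Then $A$ is unitary and its first row equals $(\sqrt m\,v_1,\dots,\sqrt m\,v_m)F_m^\dagger$.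
   Context: The Kronecker product $B_{m/4}\otimes\cdots\otimes B_1\otimes B_0$ has $k$ factors $B_{2^{k-2}},\dots,B_2,B_1,B_0$, the leftmost factor acting on the most significant binary digit of the index $0,\dots,m-1$. *)

(* Defs.v *)
From HB Require Import structures.
From mathcomp Require Import all_boot all_order all_algebra.
From mathcomp Require Import complex sesquilinear spectral.
From mathcomp Require Import reals trigo.
Set Implicit Arguments. Unset Strict Implicit. Unset Printing Implicit Defensive.
Import Order.TTheory GRing.Theory Num.Theory.
Local Open Scope ring_scope.
Local Open Scope complex_scope.
Local Open Scope sesquilinear_scope.

Section Defs.
Variable R : realType.
Local Notation C := R[i].

Definition adjmx (m n : nat) (A : 'M[C]_(m, n)) : 'M[C]_(n, m) :=
  A ^t*.

Definition omega (m : nat) : C :=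
  (cos (2 * pi / m%:R))%:C + 'i * (sin (2 * pi / m%:R))%:C.

Definition Fmx (m : nat) : 'M[C]_m :=
  \matrix_(j < m, l < m) ((sqrtC (m%:R))^-1 * omega m ^+ (j * l)%N).

Definition Bmx (alpha : C) (j : nat) : 'M[C]_2 :=
  (sqrtC (1 + `|alpha| ^+ (2 * j)%N))^-1 *:
  \matrix_(r < 2, c < 2)
     (if (r == 0 :> nat) then (if (c == 0 :> nat) then 1 else alpha ^+ j)
      else (if (c == 0 :> nat) then (Num.conj alpha) ^+ j else -1)).

Definition bit (t i : nat) : 'I_2 := inord (odd (i %/ 2 ^ t)%N).

(* the subscript of the factor acting on binary digit t in
   B_{2^(k-2)} (x) ... (x) B_2 (x) B_1 (x) B_0 :
   digit 0 -> B_0, digit t >= 1 -> B_{2^(t-1)} *)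
Definition bsub (t : nat) : nat := if t == 0%N then 0%N else (2 ^ t.-1)%N.

(* The Kronecker product B_{m/4} (x) ... (x) B_1 (x) B_0 (k factors, m = 2^k,
   leftmost factor on the most significant binary digit), written entrywise:
   (X (x) Y)_{(i1 i2),(j1 j2)} = X_{i1 j1} Y_{i2 j2}. *)
Definition Kmx (alpha : C) (k : nat) : 'M[C]_(2 ^ k) :=
  \matrix_(i < 2 ^ k, j < 2 ^ k)
     \prod_(t < k) Bmx alpha (bsub t) (bit t i) (bit t j).

Definition sigma (m c : nat) : nat :=
  if (c < m./2)%N then (2 * c)%N else (2 * (m.-1 - c)).+1%N.

(* J |c> = |sigma c>, i.e. J_{r c} = [r = sigma c] *)
Definition Jmx (m : nat) : 'M[C]_m :=
  \matrix_(r < m, c < m) (if (r == sigma m c :> nat) then 1 else 0).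

Definition Amx (alpha : C) (k : nat) : 'M[C]_(2 ^ k) :=
  adjmx (Jmx (2 ^ k)) *m Kmx alpha k *m Jmx (2 ^ k) *m adjmx (Fmx (2 ^ k)).

Definition kappa (alpha : C) (m : nat) : C :=
  (2 * m)%N%:R * \sum_(t < m./2) `|alpha| ^+ (2 * t)%N.

(* Psi = 1/sqrt kappa (1, alpha, ..., alpha^(m/2-1), alpha^(m/2-1), ..., alpha, 1)^T,
   given as a row vector (v_1, ..., v_m) *)
Definition Psi (alpha : C) (m : nat) : 'rV[C]_m :=
  \row_(i < m) ((sqrtC (kappa alpha m))^-1 *
                (if (i < m./2)%N then alpha ^+ i else alpha ^+ (m.-1 - i)%N)).

End Defs.

(* Main.v *)
Require Import Defs.
From HB Require Import structures.
From mathcomp Require Import all_boot all_order all_algebra.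
From mathcomp Require Import complex sesquilinear spectral.
From mathcomp Require Import reals trigo.
From mathcomp Require Import ring lra zify.
Import Order.TTheory GRing.Theory Num.Theory.
Local Open Scope ring_scope.
Local Open Scope complex_scope.

Section Omega.
Variable R : realType.
Local Notation C := R[i].

Lemma sqr_i' : ('i : C) * 'i = -1.
Proof. by rewrite -expr2 sqr_i. Qed.

Lemma demoivre (x : R) n :
  ((cos x)%:C + 'i * (sin x)%:C) ^+ n = (cos (x *+ n))%:C + 'i * (sin (x *+ n))%:C :> C.
Proof.
elim: n => [|n IH]; first by rewrite expr0 mulr0n cos0 sin0 mulr0 addr0.
rewrite exprS IH mulrS cosD sinD !rmorphD /= !rmorphM /= ?rmorphN /= ?rmorphM /=.
apply/eqP; rewrite -subr_eq0; apply/eqP.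
set a := (cos x)%:C; set b := (sin x)%:C; set c := (cos (x *+ n))%:C; set d := (sin (x*+n))%:C.
have -> : (a + 'i * b) * (c + 'i * d) - (a * c - b * d + 'i * (b * c + a * d))
   = ('i * 'i + 1) * (b * d) by ring.
by rewrite sqr_i' addNr mul0r.
Qed.

Lemma omega_exp m n : omega R m ^+ n =
   (cos ((2 * pi / m%:R) *+ n))%:C + 'i * (sin ((2 * pi / m%:R) *+ n))%:C.
Proof. exact: demoivre. Qed.

Lemma omega_m m : (0 < m)%N -> omega R m ^+ m = 1.
Proof.
move=> m0; rewrite omega_exp -mulr_natr divfK ?pnatr_eq0 -?lt0n //.
by rewrite mulr_natl cos2pi sin2pi mulr0 addr0.
Qed.

Lemma omega_half k : (0 < k)%N -> omega R (2 ^ k) ^+ (2 ^ k.-1) = -1.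
Proof.
move=> k0; rewrite omega_exp -mulr_natr.
have -> : 2 * pi / (2 ^ k)%:R * (2 ^ k.-1)%:R = pi :> R.
  rewrite -{1}(prednK k0) expnS natrM.
  have h : (2 ^ k.-1)%:R != 0 :> R by rewrite pnatr_eq0 expn_eq0.
  by field.
by rewrite cospi sinpi mulr0 addr0 rmorphN.
Qed.

Lemma omega_prim k : (0 < k)%N -> (2 ^ k).-primitive_root (omega R (2 ^ k)).
Proof.
move=> k0.
have m0 : (0 < 2 ^ k)%N by rewrite expn_gt0.
have [d pd dd] := prim_order_exists m0 (omega_m _ m0).
have /(dvdn_pfactor _ _ (isT : prime 2)) [e ek de] := dd.
rewrite de in pd.
case: (ltnP e k) => ekk; last by have ee : e = k by [lia]; rewrite ee in pd.
exfalso.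
have : omega R (2 ^ k) ^+ (2 ^ k.-1) = 1.
  have -> : (2 ^ k.-1 = 2 ^ e * 2 ^ (k.-1 - e))%N by rewrite -expnD; congr (expn _ _); lia.
  by rewrite exprM (prim_expr_order pd) expr1n.
rewrite omega_half // => /eqP; rewrite -subr_eq0 -opprD oppr_eq0.
by rewrite (_ : 1 + 1 = 2%:R) // pnatr_eq0.
Qed.

Lemma omega_conj m : (0 < m)%N -> Num.conj (omega R m) = omega R m ^+ m.-1.
Proof.
move=> m0.
have h1 : omega R m * Num.conj (omega R m) = 1.
  have cr : forall x : R, Num.conj (x%:C : C) = x%:C := fun x => conjc_real x.
  rewrite /omega rmorphD rmorphM /= !cr.
  have -> : Num.conj ('i : C) = - 'i by apply/eqP; rewrite eq_complex /= oppr0 !eqxx.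
  set a := cos _; set b := sin _.
  have -> : (a%:C + 'i * b%:C) * (a%:C + - 'i * b%:C) = a%:C ^+ 2 - ('i * 'i) * b%:C ^+2 by ring.
  by rewrite sqr_i' -!rmorphXn /= mulN1r opprK -rmorphD /= cos2Dsin2.
have h2 : omega R m ^+ m.-1 * omega R m = 1 by rewrite -exprSr prednK // omega_m.
by rewrite -[LHS]mul1r -h2 -mulrA h1 mulr1.
Qed.


Lemma geom_sum (w : C) m : w ^+ m = 1 -> w != 1 -> \sum_(n < m) w ^+ n = 0.
Proof.
move=> wm w1; have := subrX1 w m; rewrite wm subrr => /esym/eqP.
by rewrite mulf_eq0 subr_eq0 (negbTE w1) /= => /eqP.
Qed.

Lemma Fmx_unitary k : (0 < k)%N -> Fmx R (2 ^ k) \is unitarymx.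
Proof.
move=> k0; set m := (2 ^ k)%N.
have m0 : (0 < m)%N by rewrite expn_gt0.
have pr := omega_prim _ k0.
apply/unitarymxP; apply/matrixP => j l; rewrite !mxE.
pose s := sqrtC (m%:R : C).
have sc : Num.conj (s^-1) = s^-1 by rewrite geC0_conj // invr_ge0 sqrtC_ge0 ler0n.
have ss : s^-1 * s^-1 = (m%:R)^-1 by rewrite -invfM -expr2 sqrtCK.
set d := (j + m.-1 * l)%N.
have eqt : forall n : 'I_m, Fmx R m j n * Num.conj (Fmx R m l n) =
    (m%:R)^-1 * (omega R m ^+ d) ^+ n.
  have hcM : forall x y : C, Num.conj (x * y) = Num.conj x * Num.conj y by move=> x y; rewrite rmorphM.
  have hcX : forall (x : C) e, Num.conj (x ^+ e) = Num.conj x ^+ e by move=> x y; rewrite rmorphXn.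
  move=> n; rewrite !mxE hcM hcX sc omega_conj // -!exprM.
  have -> : (d * n = j * n + m.-1 * (l * n))%N by rewrite /d mulnDl mulnA.
  rewrite exprD -ss /s; ring.
rewrite (eq_bigr (fun n : 'I_m => (m%:R)^-1 * (omega R m ^+ d) ^+ n)); last first.
  by move=> n _; rewrite -(eqt n) !mxE.
rewrite -mulr_sumr.
have wm : (omega R m ^+ d) ^+ m = 1 by rewrite -exprM mulnC exprM omega_m // expr1n.
case: eqP => [jl|jl].
  have -> : omega R m ^+ d = 1.
    have -> : d = (m * l)%N by rewrite /d jl -{1}(mul1n l) -mulnDl add1n prednK.
    by rewrite exprM omega_m // expr1n.
  by rewrite (eq_bigr (fun _ => 1)) ?sumr_const ?card_ord ?mulVf ?pnatr_eq0 -?lt0n // => n _; rewrite expr1n.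
rewrite geom_sum ?mulr0 //; apply/negP; rewrite -(expr0 (omega R m)) (eq_prim_root_expr pr) mod0n.
move=> /eqP hd; apply: jl; apply: val_inj => /=.
have : ((d + l) %% m = l %% m)%N by rewrite -modnDml hd.
have -> : (d + l = l * m + j)%N by rewrite /d -addnA -{2}(mul1n l) -mulnDl addn1 prednK // mulnC addnC.
rewrite modnMDl.
by rewrite !modn_small.
Qed.

End Omega.
Lemma sigma2E h c : sigma (2 * h) c = if (c < h)%N then (2 * c)%N else (2 * (2 * h).-1 - 2 * c).+1%N.
Proof. by rewrite /sigma mul2n doubleK mulnBr. Qed.

Lemma sigma_lt h c : (c < 2 * h)%N -> (sigma (2 * h) c < 2 * h)%N.
Proof. rewrite sigma2E; case: ifP => ? ?; lia. Qed.

Lemma sigma_inj h c c' : (c < 2 * h)%N -> (c' < 2 * h)%N ->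
  sigma (2 * h) c = sigma (2 * h) c' -> c = c'.
Proof. rewrite !sigma2E; case: ifP => ?; case: ifP => ? ? ? ?; lia. Qed.

Section J.
Variable R : realType.
Local Notation C := R[i].

Lemma Jmx_unitary h : Jmx R (2 * h)%N \is unitarymx.
Proof.
apply/unitarymxP; apply: mulmx1C; apply/matrixP => c c'; rewrite !mxE.
have lt c0 : (c0 < 2 * h)%N -> (sigma (2 * h) c0 < 2 * h)%N by apply: sigma_lt.
rewrite (bigD1 (Ordinal (lt _ (ltn_ord c)))) //= big1 ?addr0; last first.
  move=> r /negbTE rne; rewrite !mxE.
  have -> : (r == sigma (2 * h) c :> nat) = false.
    by apply/negbTE; apply: contraFN rne => /eqP e; apply/eqP/val_inj.
  by rewrite rmorph0 mul0r.
rewrite !mxE eqxx rmorph1 mul1r.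
case: (eqVneq c c') => [->|ne]; first by rewrite eqxx.
have -> : (sigma (2 * h) c == sigma (2 * h) c') = false.
  apply/negbTE; apply: contra ne => /eqP e; apply/eqP/val_inj.
  exact: (@sigma_inj h c c' (ltn_ord c) (ltn_ord c') e).
by [].
Qed.

End J.
Lemma bitE t i : val (bit t i) = odd (i %/ 2 ^ t)%N.
Proof. by rewrite /bit; apply: inordK; rewrite ltnS leq_b1. Qed.

Lemma bitsum k n : (n < 2 ^ k)%N -> (\sum_(t < k) 2 ^ t * odd (n %/ 2 ^ t))%N = n.
Proof.
elim: k n => [|k IH] n nlt; first by rewrite big_ord0; move: nlt; rewrite expn0; lia.
rewrite big_ord_recl /= expn0 divn1 mul1n.
have h : (n %/ 2 < 2 ^ k)%N by rewrite ltn_divLR // mulnC -expnS.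
rewrite (eq_bigr (fun t : 'I_k => 2 * (2 ^ t * odd (n %/ 2 %/ 2 ^ t)))%N); last first.
  by move=> t _; rewrite /bump /= add1n expnS -divnMA mulnA.
rewrite -big_distrr /= IH // divn2 mulnC muln2; exact: odd_double_half.
Qed.

Lemma bits_inj k n n' : (n < 2 ^ k)%N -> (n' < 2 ^ k)%N ->
  (forall t : 'I_k, bit t n = bit t n') -> n = n'.
Proof.
move=> hn hn' e; rewrite -(bitsum _ _ hn) -(bitsum _ _ hn'); apply: eq_bigr => t _.
by rewrite -!bitE e.
Qed.

Section K.
Variable R : realType.
Local Notation C := R[i].

Lemma Bmx_unitary (alpha : C) j : Bmx alpha j \is unitarymx.
Proof.
have hcM : forall x y : C, Num.conj (x * y) = Num.conj x * Num.conj y by move=> x y; rewrite rmorphM.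
have hcX : forall (x : C) e, Num.conj (x ^+ e) = Num.conj x ^+ e by move=> x y; rewrite rmorphXn.
have hc1 : Num.conj (1 : C) = 1 by rewrite rmorph1.
have hcN1 : Num.conj (-1 : C) = -1 by rewrite rmorphN1.
set N := 1 + `|alpha| ^+ (2 * j).
have N0 : N != 0 by rewrite lt0r_neq0 // ltr_pwDl // exprn_ge0.
set c := (sqrtC N)^-1.
have cc : Num.conj c = c by rewrite geC0_conj // invr_ge0 sqrtC_ge0 addr_ge0 // exprn_ge0.
set x := alpha ^+ j.
have hx : Num.conj alpha ^+ j = Num.conj x by rewrite hcX.
have H : c * c * (1 + x * Num.conj x) = 1.
  by rewrite -normCK normrX -exprM mulnC -/N /c -invfM -expr2 sqrtCK mulVf.
apply/(@unitarymxP _ 2 2); apply/matrixP => r s; rewrite !mxE !big_ord_recl big_ord0 !mxE.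
rewrite /= ?hx ?hcM -/N -/c -/x.
case: r => [[|[|r]]] // Hr; case: s => [[|[|s]]] // Hs /=; rewrite ?hcM ?cc ?conjCK ?hc1 ?hcN1.
- by rewrite -[RHS]H; ring.
- by ring.
- by ring.
- by rewrite -[RHS]H; ring.
Qed.


Lemma Kmx_unitary (alpha : C) k : Kmx alpha k \is unitarymx.
Proof.
apply/unitarymxP; apply/matrixP => i j; rewrite !mxE.
pose G (t : 'I_k) (b : 'I_2) := Bmx alpha (bsub t) (bit t i) b * Num.conj (Bmx alpha (bsub t) (bit t j) b).
have hG t : \sum_b G t b = (bit t i == bit t j)%:R.
  have := congr1 (fun M : 'M[C]_2 => M (bit t i) (bit t j)) (unitarymxP (Bmx_unitary alpha (bsub t))).
  rewrite !mxE => <-; apply: eq_bigr => b _; rewrite /G !mxE //.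
transitivity (\sum_(l < 2 ^ k) \prod_(t < k) G t (bit t l)).
  apply: eq_bigr => l _; rewrite !mxE rmorph_prod -big_split //.
pose g (l : 'I_(2 ^ k)) : {ffun 'I_k -> 'I_2} := [ffun t : 'I_k => bit t l].
have ginj : injective g.
  move=> l l' e; apply: val_inj; apply: (@bits_inj k _ _ (ltn_ord l) (ltn_ord l')) => t.
  by have := congr1 (fun f : {ffun 'I_k -> 'I_2} => f t) e; rewrite /g !ffunE.
have gbij : bijective g by apply: (inj_card_bij ginj); rewrite card_ffun !card_ord.
transitivity (\sum_(f : {ffun 'I_k -> 'I_2}) \prod_(t < k) G t (f t)).
  rewrite (reindex g) /=; last by apply: onW_bij.
  by apply: eq_bigr => l _; apply: eq_bigr => t _; rewrite /g ffunE.
rewrite -bigA_distr_bigA /= (eq_bigr _ (fun t _ => hG t)).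
case: (eqVneq i j) => [->|ne].
  by rewrite big1 ?eqxx // => t _; rewrite eqxx.
case: (boolP [forall t : 'I_k, bit t i == bit t j]) => [/forallP H | /forallPn [t ht]].
  by case/eqP: ne; apply: val_inj; apply: (@bits_inj k _ _ (ltn_ord i) (ltn_ord j)) => t; apply/eqP.
by rewrite (bigD1 t) //= (negbTE ht) mul0r.
Qed.

End K.

Section Final.
Variable R : realType.
Local Notation C := R[i].

Lemma sqrtC_prod (I : Type) (r : seq I) (F : I -> C) : (forall i, 0 <= F i) ->
  \prod_(i <- r) sqrtC (F i) = sqrtC (\prod_(i <- r) F i).
Proof.
move=> F0; elim: r => [|a r IH]; first by rewrite !big_nil sqrtC1.
rewrite !big_cons IH sqrtCM // nnegrE ?F0 //; apply: prodr_ge0 => i _; exact: F0.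
Qed.

Lemma prodN (x : C) k : \prod_(t < k.+1) (1 + x ^+ bsub t) = 2 * \sum_(s < 2 ^ k) x ^+ s.
Proof.
elim: k => [|k IH].
  by rewrite big_ord_recl big_ord0 /bsub /= expr0 mulr1 expn0 big_ord_recl big_ord0 expr0 addr0 mulr1.
rewrite (big_ord_recr k.+1) /= IH /bsub /= expnS mul2n -addnn big_split_ord /=.
rewrite -mulrA; congr (_ * _).
rewrite mulrDr mulr1; congr (_ + _); rewrite mulr_suml; apply: eq_bigr => i _.
by rewrite exprD mulrC.
Qed.

Lemma bsub_sum k n : (0 < k)%N -> (n < 2 ^ k)%N ->
  (\sum_(t < k) bsub t * odd (n %/ 2 ^ t))%N = (n %/ 2)%N.
Proof.
case: k => // k _ nlt; rewrite big_ord_recl /= mul0n add0n.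
rewrite (eq_bigr (fun t : 'I_k => 2 ^ t * odd (n %/ 2 %/ 2 ^ t))%N); last first.
  by move=> t _; rewrite /bump /= add1n /bsub /= expnS -divnMA.
by apply: bitsum; rewrite ltn_divLR // mulnC -expnS.
Qed.


Lemma row0 k (alpha : C) (i0 : 'I_(2 ^ k)) : (2 <= k)%N -> val i0 = 0%N ->
  row i0 (adjmx (Jmx R (2 ^ k)) *m Kmx alpha k *m Jmx R (2 ^ k)) =
  sqrtC ((2 ^ k)%N%:R) *: Psi alpha (2 ^ k).
Proof.
case: k i0 => [//|k] i0 k2 i00; set m := (2 ^ k.+1)%N.
have m2 : m./2 = (2 ^ k)%N by rewrite /m expnS mul2n doubleK.
have slt c : (c < m)%N -> (sigma m c < m)%N by rewrite /m expnS; exact: sigma_lt.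
have s0 : sigma m i0 = 0%N by rewrite /sigma i00 m2 expn_gt0.
apply/rowP => c; rewrite !mxE.
rewrite (bigD1 (Ordinal (slt _ (ltn_ord c)))) //= big1 ?addr0; last first.
  move=> r /negbTE rne; rewrite [Jmx _ _ r c]mxE.
  have -> : (r == sigma m c :> nat) = false.
    by apply/negbTE; apply: contraFN rne => /eqP e; apply/eqP/val_inj.
  by rewrite mulr0.
rewrite [Jmx _ _ _ c]mxE eqxx mulr1 !mxE.
rewrite (bigD1 i0) //= big1 ?addr0; last first.
  move=> s /negbTE sne; rewrite !mxE s0.
  have -> : (s == 0 :> nat) = false.
    by apply/negbTE; apply: contraFN sne => /eqP e; apply/eqP/val_inj; rewrite /= e i00.
  by rewrite rmorph0 mul0r.
rewrite !mxE s0 i00 eqxx rmorph1 mul1r.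
have ht (t : 'I_k.+1) : Bmx alpha (bsub t) (bit t 0) (bit t (sigma m c)) =
   (sqrtC (1 + `|alpha| ^+ (2 * bsub t)))^-1 * alpha ^+ (bsub t * odd (sigma m c %/ 2 ^ t)).
  rewrite !mxE !bitE div0n /=.
  by case: odd; rewrite /= ?muln1 ?muln0 ?expr0 ?mulr1.
rewrite (eq_bigr _ (fun t _ => ht t)) big_split /= prodrXr bsub_sum //; last first.
  by rewrite -/m; apply: slt.
have hs : (sigma m c %/ 2 = if (c < m./2)%N then val c else (m.-1 - c))%N.
  rewrite /sigma; case: ifP => _; first by rewrite mulKn.
  by rewrite -addn1 mulnC divnMDl // divn_small // addn0.
rewrite hs -fun_if mulrA; congr (_ * _).
have x0 : 0 <= `|alpha| ^+ 2 by rewrite exprn_ge0.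
set x := `|alpha| ^+ 2 in x0.
have S0 : 0 <= 2 * \sum_(s < 2 ^ k) x ^+ s.
  by rewrite mulr_ge0 ?ler0n // sumr_ge0 // => i _; rewrite exprn_ge0.
rewrite prodfV sqrtC_prod; last by move=> i; rewrite addr_ge0 // exprn_ge0.
under eq_bigr do rewrite exprM -/x.
rewrite prodN /kappa m2.
under [X in _ = _ / sqrtC (_ * X)]eq_bigr do rewrite exprM -/x.
have -> : (2 * m)%N%:R * \sum_(i < 2 ^ k) x ^+ i = m%:R * (2 * \sum_(s < 2 ^ k) x ^+ s) :> C.
  by rewrite natrM; ring.
rewrite (@sqrtCM _ m%:R) ?nnegrE ?ler0n // invfM mulrA mulfV ?mul1r //.
by rewrite sqrtC_eq0 pnatr_eq0 expn_eq0.
Qed.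

End Final.

Theorem mainTheorem6 (R : realType) (k : nat) (alpha : R[i]) :
  (2 <= k)%N ->
  Amx alpha k \is unitarymx /\
  (forall i0 : 'I_(2 ^ k), val i0 = 0%N ->
     row i0 (Amx alpha k) =
     (sqrtC ((2 ^ k)%N%:R) *: Psi alpha (2 ^ k)%N) *m adjmx (Fmx R (2 ^ k)%N)).
Proof.
move=> k2; have k0 : (0 < k)%N by lia.
have Jp : Jmx R (2 ^ k) \is unitarymx.
  by rewrite -(prednK k0) expnS; exact: Jmx_unitary.
split.
  rewrite /Amx /adjmx; apply: mul_unitarymx; last by rewrite trmxC_unitary; exact: Fmx_unitary.
  apply: mul_unitarymx => //; apply: mul_unitarymx; last exact: Kmx_unitary.
  by rewrite trmxC_unitary.
by move=> i0 h0; rewrite /Amx row_mul row0.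
Qed.
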